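(* Suppose $\{0,1\}\subseteq\Sigma$ and $m\ge2$. Let $\pi=x_0^{n_0}x_1^{n_1}\cdots x_k^{n_k}$ with distinct variables $x_0,\dots,x_k$ and $n_0,\dots,n_k\in\{2,\dots,m\}$. Suppose that for some positive integers $\ell,i_1,\dots,i_\ell$, $w:=(01)^{i_1}(0^21)^{i_2}\cdots(0^\ell1)^{i_\ell}\in L(\pi)$. For $j\in\{1,\dots,\ell\}$ let $I_j$ be the interval of positions of $w$ occupied by the factor $(0^j1)^{i_j}$ in this factorisation, and for $j\in\{0,\dots,k\}$ let $J_j$ be the interval of positions of $\pi$ occupied by $x_j^{n_j}$. Let $h$ be any substitution with $h(\pi)=w$ and $h(x_i)\neq\varepsilon$ for all $i\in\{0,\dots,k\}$. Then: (i) for every $j\in\{0,\dots,k\}$, $h(x_j)=(0^{j'}1)^{i'}$ for some $j'\in\{1,\dots,\ell\}$ and $i'\in\{1,\dots,i_{j'}\}$; (ii) for every $j\in\{1,\dots,\ell\}$ there are $g_j\in\{0,\dots,k\}$ and $h_j\in\{0,\dots,k-g_j\}$ such that $I_j$ is the disjoint union $\bigcup_{l=0}^{h_j}\mathcal I_{h,\pi}(J_{g_j+l})$.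
   Context: Fix a countably infinite set $X$ of variables and an alphabet $\Sigma$ disjoint from $X$. A pattern is a nonempty finite string over $X\cup\Sigma$. A substitution is a morphism $h:(X\cup\Sigma)^*\to\Sigma^*$ fixing letters; $L(\pi)$ (erasing pattern language) is the set of all $h(\pi)$. For a substitution $h$ and a pattern $\pi$, $\mathcal I_{h,\pi}$ maps a closed interval $[p,q]$ of positions of $\pi$ to the closed interval of positions of $h(\pi)$ occupied by the factor $h(\pi[p]\cdots\pi[q])$ in $h(\pi)=h(\pi[1])\cdots h(\pi[|\pi|])$. *)

(* Defs.v *)
From mathcomp Require Import all_boot.
Set Implicit Arguments. Unset Strict Implicit. Unset Printing Implicit Defensive.

(* Symbols of patterns over X ∪ Σ, with X = nat (countably infinite). *)
Inductive sym (S : Type) := Var of nat | Let of S.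
Arguments Var {S} _.
Arguments Let {S} _.

(* A substitution is determined by its values on variables; letters are fixed. *)
Definition subst (S : Type) := nat -> seq S.

Definition happly (S : Type) (h : subst S) (p : seq (sym S)) : seq S :=
  flatten (map (fun s => match s with Var x => h x | Let a => [:: a] end) p).

(* Erasing pattern language membership. *)
Definition inL (S : Type) (p : seq (sym S)) (w : seq S) : Prop :=
  exists h : subst S, happly h p = w.

(* Closed intervals [p,q] of 1-based positions, as pairs; membership. *)
Definition in_itv (I : nat * nat) (x : nat) : bool := (I.1 <= x) && (x <= I.2).

(* I_{h,pi}([p,q]) : positions of h(pi) occupied by h(pi[p]...pi[q]). *)
Definition Ihpi (S : Type) (h : subst S) (pi : seq (sym S)) (I : nat * nat)
  : nat * nat :=
  ((size (happly h (take I.1.-1 pi))).+1, size (happly h (take I.2 pi))).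

Definition power_pattern (S : Type) (k : nat) (x n : nat -> nat) : seq (sym S) :=
  flatten [seq nseq (n j) (Var (x j)) | j <- iota 0 k.+1].

Definition Jint (n : nat -> nat) (j : nat) : nat * nat :=
  ((\sum_(t < j) n t).+1, \sum_(t < j.+1) n t).

Definition blk (S : Type) (zero one : S) (j i : nat) : seq S :=
  flatten (nseq i (rcons (nseq j zero) one)).

Definition wword (S : Type) (zero one : S) (l : nat) (i : nat -> nat) : seq S :=
  flatten [seq blk zero one j (i j) | j <- iota 1 l].

(* I_j : interval of positions of w occupied by (0^j 1)^{i_j} (1 <= j <= l);
   block t has length (t+1) * i_t. *)
Definition Iint (i : nat -> nat) (j : nat) : nat * nat :=
  ((\sum_(1 <= t < j) t.+1 * i t).+1, \sum_(1 <= t < j.+1) t.+1 * i t).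

(* Main.v *)
Require Import Defs.
From mathcomp Require Import all_boot zify.
Set Implicit Arguments. Unset Strict Implicit. Unset Printing Implicit Defensive.

Section W.
Variable S : eqType.
Variables zero one : S.
Hypothesis zo : zero != one.

Definition unitw t := rcons (nseq t zero) one.
Definition U (ts : seq nat) := flatten (map unitw ts).
Definition pw (u : seq S) n := flatten (nseq n u).
Definition catp (ps : seq (seq S * nat)) := flatten (map (fun p => pw p.1 p.2) ps).
Definition okp (p : seq S * nat) := (p.1 != [::]) && (1 < p.2).

Lemma U_cons t ts : U (t :: ts) = nseq t zero ++ one :: U ts.
Proof. by rewrite /U /= /unitw cat_rcons. Qed.

Lemma U_cat a b : U (a ++ b) = U a ++ U b.
Proof. by rewrite /U map_cat flatten_cat. Qed.

Lemma unit_inj a b s s' : nseq a zero ++ one :: s = nseq b zero ++ one :: s' -> a = b /\ s = s'.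
Proof.
elim: a b => [|a IH] [|b] //=.
- by case.
- by case => /eqP; rewrite eq_sym (negbTE zo).
- by case => /eqP; rewrite (negbTE zo).
- by case => /IH [-> ->].
Qed.

Lemma U_inj ts ts' : U ts = U ts' -> ts = ts'.
Proof.
elim: ts ts' => [|t ts IH] [|t' ts'] //.
- by rewrite U_cons /U /=; case: t'.
- by rewrite U_cons /U /=; case: t.
- by rewrite !U_cons => /unit_inj [-> /IH ->].
Qed.

Lemma last_U x t ts : last x (U (t :: ts)) = one.
Proof.
elim: ts x t => [|t' ts IH] x t.
- by rewrite /U /= cats0 /unitw last_rcons.
- by rewrite /U /= last_cat -/(U (t' :: ts)) IH.
Qed.

Lemma last_zeros x s c : 0 < c -> last x (s ++ nseq c zero) = zero.
Proof.
case: c => // c _; rewrite last_cat /=; elim: c => //.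
Qed.

Lemma pwSr u n : pw u n.+1 = pw u n ++ u.
Proof.
elim: n => [|n IH]; first by rewrite /pw /= cats0.
by change (u ++ pw u n.+1 = (u ++ pw u n) ++ u); rewrite IH catA.
Qed.

Lemma pw_nseq a t n : pw (U (nseq a t)) n = U (nseq (a * n) t).
Proof.
elim: n => [|n IH]; first by rewrite muln0.
by rewrite /pw /= -/(pw _ n) IH mulnS nseqD U_cat.
Qed.

Lemma pw_nil u n : u != [::] -> 0 < n -> pw u n != [::].
Proof. by case: n => // n; case: u. Qed.

Lemma zeros_split t v r s : nseq t zero ++ one :: s = v ++ r ->
  (size v <= t /\ v = nseq (size v) zero /\ r = nseq (t - size v) zero ++ one :: s)
  \/ (exists v', v = nseq t zero ++ one :: v' /\ s = v' ++ r).
Proof.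
elim: t v => [|t IH] [|y v] /=.
- by move=> <-; left.
- by case=> <- ->; right; exists v.
- by move=> <-; left.
- case=> <- /IH [[H1 [H2 H3]]|[v' [H1 H2]]].
  + by left; rewrite ltnS H1 -H2 H3.
  + by right; exists v'; rewrite H1.
Qed.

Lemma decomp ts : forall v r, U ts = v ++ r -> exists ta tb, ts = ta ++ tb /\
  ((v = U ta /\ r = U tb) \/ exists t tc c, [/\ tb = t :: tc, 0 < c <= t,
     v = U ta ++ nseq c zero & r = nseq (t - c) zero ++ one :: U tc]).
Proof.
elim: ts => [|t ts IH] v r.
- case: v => [|y v]; case: r => [|z r] //= _.
  by exists [::], [::]; split => //; left.
- rewrite U_cons => /zeros_split [[H1 [H2 H3]]|[v' [H1 H2]]].
  + exists [::], (t :: ts); split => //.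
    case E: (size v) H1 H2 H3 => [|c] H1 H2 H3.
    * by left; rewrite H2 H3 subn0 U_cons.
    * by right; exists t, ts, c.+1; split => //; rewrite ?E ?H1.
  + have [ta [tb [E [[Ev Er]|[t' [tc [c [Etb Hc Ev Er]]]]]]]] := IH _ _ H2.
    * by exists (t :: ta), tb; rewrite E; split => //; left; rewrite H1 Ev U_cons.
    * exists (t :: ta), tb; rewrite E; split => //; right; exists t', tc, c; split => //.
      by rewrite H1 Ev U_cons -catA.
Qed.

Lemma sorted_suffix (ta : seq nat) t tc : sorted leq (ta ++ t :: tc) ->
  sorted leq tc /\ all (leq t) tc.
Proof.
rewrite sorted_pairwise; last exact: leq_trans.
rewrite pairwise_cat => /and3P[_ _] /= /andP[H1 H2].
by split=> //; rewrite sorted_pairwise //; exact: leq_trans.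
Qed.

Lemma sorted_catr (ta tb : seq nat) : sorted leq (ta ++ tb) -> sorted leq tb.
Proof.
rewrite !sorted_pairwise; try exact: leq_trans.
by rewrite pairwise_cat => /and3P[].
Qed.

Lemma sorted_dup (xs z : seq nat) : sorted leq (xs ++ xs ++ z) ->
  xs = nseq (size xs) (head 0 xs).
Proof.
case: xs => [|x xs] //.
rewrite sorted_pairwise; last exact: leq_trans.
rewrite /= pairwise_cat => /andP[/allP H1 /and3P[/allP H2 _ _]].
congr (_ :: _); apply/all_pred1P/allP => y yin /=.
rewrite eqn_leq; apply/andP; split.
- by have := H2 y yin => /= /andP[].
- by apply: H1; rewrite mem_cat yin.
Qed.

Lemma catp_cons u n ps : catp ((u, n) :: ps) = pw u n ++ catp ps.
Proof. by []. Qed.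

Lemma mid ps : forall b R, sorted leq R -> all (fun t => b < t) R -> all okp ps ->
  catp ps = U (b :: R) -> False.
Proof.
elim: ps => [|[u n] ps IH] b R sR aR.
- by rewrite /catp U_cons /= => _; case: (nseq b zero).
- rewrite /= => /andP[/andP[/= u0 n1] okps]; rewrite catp_cons => E.
  have [ta [tb [Et [[Ep Er]|[t [tc [c [Etb Hc Ep Er]]]]]]]] := decomp (esym E).
  + case: ta Et Ep => [|y ta'] Et Ep.
      by move: (pw_nil u0 (ltnW n1)); rewrite Ep.
    case: n n1 Ep {E} => [|[|n']] // _ Ep.
    have Ep' : U (y :: ta') = u ++ pw u n'.+1 by rewrite -Ep.
    have := decomp Ep' => -[ua [ub [Eta [[Eu Er1]|[t [tc [c [Etb Hc Eu Er1]]]]]]]].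
    * have ua0 : ua != [::] by move: u0; rewrite Eu; apply: contra => /eqP ->.
      move: Er1; change (pw u n'.+1) with (u ++ pw u n'); rewrite Eu => Er1.
      have := decomp (esym Er1) => -[ub1 [ub2 [Eub [[Eua _]|[t [tc [c [_ Hc Eua _]]]]]]]].
      - move/U_inj: Eua => Eua; subst ub1.
        clear Er1; case: ua ua0 Eu Eta Eub => [|z ua'] // _ Eu Eta Eub.
        move: Et; rewrite Eta Eub /= => -[Ez ER]; subst z.
        have : b \in R by rewrite ER !mem_cat in_cons eqxx !orbT.
        by move/(allP aR); rewrite ltnn.
      - case: ua ua0 Eua {Eu Eta Eub Er1} => [|z ua'] // _ Eua.
        have := last_U zero z ua'; rewrite Eua last_zeros //; last by case/andP: Hc.
        by move/eqP; rewrite (negbTE zo).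
    * have := last_U zero y ta'; rewrite -Ep pwSr last_cat Eu last_zeros //.
        by move/eqP; rewrite (negbTE zo).
      by case/andP: Hc.
  + have sbR : sorted leq (b :: R).
      rewrite /= path_sortedE; last exact: leq_trans.
      by rewrite sR andbT; apply: sub_all aR => z /ltnW.
    rewrite Et Etb in sbR; have [stc atc] := sorted_suffix sbR.
    apply: (IH (t - c) tc stc _ okps); last by rewrite Er U_cons.
    apply: sub_all atc => z tz; case/andP: Hc => c0 ct; lia.
Qed.

Lemma bound ts p ps : sorted leq ts -> all okp ps -> U ts = p ++ catp ps ->
  exists ta tb, [/\ ts = ta ++ tb, p = U ta & catp ps = U tb].
Proof.
move=> sts okps E.
have [ta [tb [Et [[Ep Er]|[t [tc [c [Etb Hc Ep Er]]]]]]]] := decomp E.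
- by exists ta, tb.
- exfalso; rewrite Et Etb in sts; have [stc atc] := sorted_suffix sts.
  apply: (mid stc _ okps); last by rewrite Er U_cons.
  apply: sub_all atc => z tz; case/andP: Hc => c0 ct; lia.
Qed.

Lemma step u n X : u != [::] -> 1 < n -> sorted leq X -> pw u n = U X ->
  exists a t, [/\ 0 < a, u = U (nseq a t) & X = nseq (a * n) t].
Proof.
move=> u0 n1 sX E.
case: X sX E => [|x X'] sX E.
  by move: (pw_nil u0 (ltnW n1)); rewrite E.
case: n n1 E => [|[|n']] // _ E.
have := decomp (esym E) => -[xa [xb [EX [[Eu Er1]|[t [tc [c [_ Hc Eu _]]]]]]]].
- have xa0 : xa != [::] by move: u0; rewrite Eu; apply: contra => /eqP ->.
  move: Er1; change (pw u n'.+1) with (u ++ pw u n'); rewrite Eu => Er1.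
  have := decomp (esym Er1) => -[xb1 [xb2 [Exb [[Exa _]|[t [tc [c [_ Hc Exa _]]]]]]]].
  + move/U_inj: Exa => Exa; subst xb1.
    move: sX; rewrite EX Exb => /sorted_dup Hd.
    exists (size xa), (head 0 xa); split.
    * by case: xa xa0 {Hd Eu EX Exb Er1}.
    * by rewrite -Hd.
    * by apply: U_inj; rewrite -Exb -EX -E Eu {1}Hd pw_nseq.
  + case: xa xa0 Exa {Eu EX Exb Er1} => [|z xa'] // _ Exa.
    have := last_U zero z xa'; rewrite Exa last_zeros //; last by case/andP: Hc.
    by move/eqP; rewrite (negbTE zo).
- have := last_U zero x X'; rewrite -E pwSr last_cat Eu last_zeros //.
    by move/eqP; rewrite (negbTE zo).
  by case/andP: Hc.
Qed.

Lemma good ps : forall ts, sorted leq ts -> all okp ps -> catp ps = U ts ->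
  exists tsl : seq (seq nat), [/\ size tsl = size ps, ts = flatten tsl,
   (forall g, catp (take g ps) = U (flatten (take g tsl))) &
   (forall q, q < size ps -> exists a t, [/\ 0 < a,
      (nth ([::],0) ps q).1 = U (nseq a t) &
      nth [::] tsl q = nseq (a * (nth ([::],0) ps q).2) t])].
Proof.
elim: ps => [|[u n] ps IH] ts sts.
- move=> _ E; exists [::]; split => //; try by case.
  by apply: U_inj; rewrite -E.
- rewrite /= => /andP[/andP[/= u0 n1] okps]; rewrite catp_cons => E.
  have [X [Y [Et Ep Er]]] := bound sts okps (esym E).
  have sY : sorted leq Y by apply: (@sorted_catr X); rewrite -Et.
  have sX : sorted leq X.
    move: sts; rewrite Et !sorted_pairwise; try exact: leq_trans.
    by rewrite pairwise_cat => /and3P[].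
  have [tsl [H1 H2 H3 H4]] := IH Y sY okps Er.
  have [a [t [a0 Eu EX]]] := step u0 n1 sX Ep.
  exists (X :: tsl); split => /=.
  + by rewrite H1.
  + by rewrite Et H2.
  + case=> [|g] //=; by rewrite catp_cons H3 U_cat Ep.
  + case=> [|q] /=; first by move=> _; exists a, t.
    by move/H4.
Qed.

End W.

Lemma memF (f : nat -> nat) js z : z \in flatten [seq nseq (f j) j | j <- js] -> z \in js.
Proof.
elim: js => [|j js IH] //=; rewrite mem_cat mem_nseq in_cons.
by case/orP => [/andP[_ ->]//|/IH ->]; rewrite orbT.
Qed.

Lemma sortedF (f : nat -> nat) js : sorted leq js -> sorted leq (flatten [seq nseq (f j) j | j <- js]).
Proof.
rewrite !sorted_pairwise; try exact: leq_trans.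
elim: js => [|j js IH] //= /andP[/allP aj pj].
rewrite pairwise_cat IH // andbT; apply/andP; split.
- apply/allP => z; rewrite mem_nseq => /andP[_ /eqP->]; apply/allP => y /memF /aj //.
- elim: (f j) => //= c ->; rewrite andbT; apply/allP => y; rewrite mem_nseq => /andP[_ /eqP->] //.
Qed.

Lemma sumn_ind (f : nat -> nat) js t : uniq js -> t \in js ->
  sumn [seq (j == t) * f j | j <- js] = f t.
Proof.
elim: js => [|j js IH] //= /andP[jn u]; rewrite in_cons => /orP[/eqP->|tin].
- rewrite eqxx mul1n; clear IH u.
  suff -> : sumn [seq (j0 == j) * f j0 | j0 <- js] = 0 by rewrite addn0.
  elim: js jn => [|j' js IH'] //=; rewrite in_cons negb_or => /andP[ne /IH' ->].
  by rewrite eq_sym (negbTE ne).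
- rewrite IH //; have -> : (j == t) = false by apply/negbTE; apply: contraNneq jn => ->.
  by [].
Qed.

Lemma nth_le_sumn (s : seq nat) q : nth 0 s q <= sumn s.
Proof. elim: s q => [|a s IH] [|q] //=; [exact: leq_addr | exact: leq_trans (IH q) (leq_addl _ _)]. Qed.

Lemma filter_pre tsl j : sorted leq (flatten tsl) ->
  (forall q, q < size tsl -> exists c t, nth [::] tsl q = nseq c t) ->
  exists g, g <= size tsl /\ flatten (take g tsl) = [seq z <- flatten tsl | z < j].
Proof.
elim: tsl => [|s tsl IH] /=; first by exists 0.
move=> ss Hq; have [c [t Es]] := Hq 0 isT; rewrite /= in Es; subst s.
have [g [g1 Eg]] : exists g, g <= size tsl /\ flatten (take g tsl) = [seq z <- flatten tsl | z < j].
  apply: IH; first by apply: (@sorted_catr (nseq c t)).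
  by move=> q qs; apply: (Hq q.+1).
case: (posnP c) => [c0|cp]; first by subst c; exists g.+1; split => //.
case: (ltnP t j) => tj.
- by exists g.+1; split => //=; rewrite Eg filter_cat filter_nseq tj mul1n.
- exists 0; split => //=; rewrite filter_cat filter_nseq ltnNge tj /=.
  move: ss; rewrite sorted_pairwise; last exact: leq_trans.
  rewrite pairwise_cat => /and3P[/allP A _ _].
  have : t \in nseq c t by rewrite mem_nseq cp eqxx.
  move/A => /allP B.
  rewrite (eq_in_filter (a2 := pred0)) ?filter_pred0 // => z /B tz /=.
  by apply/negbTE; rewrite -leqNgt; apply: leq_trans tz.
Qed.

Lemma takeF (T : Type) (L : seq (seq T)) g : take (sumn (map size (take g L))) (flatten L) = flatten (take g L).
Proof.
elim: L g => [|a L IH] [|g] //=; first by rewrite take0.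
by rewrite takeD take_size_cat // drop_size_cat // IH.
Qed.

Lemma happly_cat (S : Type) (h : subst S) a b : happly h (a ++ b) = happly h a ++ happly h b.
Proof. by rewrite /happly map_cat flatten_cat. Qed.

Lemma happly_pp (S : eqType) (h : subst S) (x n : nat -> nat) js :
  happly h (flatten [seq nseq (n j) (Var (x j)) | j <- js]) = catp [seq (h (x j), n j) | j <- js].
Proof.
elim: js => [|j js IH] //=; rewrite happly_cat IH; congr (_ ++ _).
by rewrite /pw; elim: (n j) => //= c IH'; rewrite -IH'.
Qed.

Lemma blk_U (S : eqType) (zero one : S) j c : blk zero one j c = U zero one (nseq c j).
Proof. by rewrite /blk /U map_nseq. Qed.

Lemma wword_U (S : eqType) (zero one : S) (f : nat -> nat) js :
  flatten [seq blk zero one j (f j) | j <- js] = U zero one (flatten [seq nseq (f j) j | j <- js]).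
Proof. by elim: js => [|j js IH] //=; rewrite U_cat IH blk_U. Qed.

Lemma size_U_nseq (S : eqType) (zero one : S) c s : size (U zero one (nseq c s)) = c * s.+1.
Proof.
elim: c => [|c IH] //=.
by rewrite /U /= size_cat -/(U zero one _) IH /unitw size_rcons size_nseq mulSn.
Qed.

Lemma sizeU (S : eqType) (zero one : S) (f : nat -> nat) js :
  size (U zero one (flatten [seq nseq (f s) s | s <- js])) = \sum_(s <- js) s.+1 * f s.
Proof.
elim: js => [|j js IH]; first by rewrite big_nil.
by rewrite big_cons /= U_cat size_cat IH size_U_nseq mulnC.
Qed.

Lemma catp_cat (S : eqType) (a b : seq (seq S * nat)) : catp (a ++ b) = catp a ++ catp b.
Proof. by rewrite /catp map_cat flatten_cat. Qed.

Section P.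
Variable S : eqType.
Variable ps : seq (seq S * nat).
Definition P g := size (catp (take g ps)).

Lemma P_mono a b : a <= b -> P a <= P b.
Proof.
move=> ab; rewrite /P -(subnKC ab) takeD catp_cat size_cat; exact: leq_addr.
Qed.

Lemma P_strict a : all (@okp S) ps -> a < size ps -> P a < P a.+1.
Proof.
move=> ok aS; rewrite /P -[a.+1]addn1 takeD (drop_nth ([::],0)) // catp_cat size_cat /= -[X in X < _]addn0 ltn_add2l.
have : okp (nth ([::], 0) ps a) by apply: (allP ok); rewrite mem_nth.
case: (nth _ ps a) => u n /andP[/= u0 n1].
rewrite /catp /= take0 /= cats0 lt0n size_eq0; exact: pw_nil u0 (ltnW n1).
Qed.

Lemma P_find p d g : P g < p -> p <= P (g + d.+1) ->
  exists2 t, t <= d & P (g + t) < p <= P (g + t).+1.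
Proof.
elim: d => [|d IH] H1 H2.
- exists 0 => //; rewrite addn0 H1 /=; by rewrite addn1 in H2.
- case: (leqP p (P (g + d.+1))) => H3.
  + by have [t td Ht] := IH H1 H3; exists t => //; exact: leqW.
  + by exists d.+1 => //; rewrite H3 /= -addnS.
Qed.
End P.

Theorem mainTheorem11 (Sigma : finType) (zero one : Sigma) (m : nat)
  (k : nat) (x n : nat -> nat) (l : nat) (i : nat -> nat) (h : subst Sigma) :
  zero != one ->
  2 <= m ->
  (forall a b, a <= k -> b <= k -> x a = x b -> a = b) ->
  (forall j, j <= k -> 2 <= n j <= m) ->
  0 < l ->
  (forall j, 1 <= j <= l -> 0 < i j) ->
  inL (power_pattern Sigma k x n) (wword zero one l i) ->
  happly h (power_pattern Sigma k x n) = wword zero one l i ->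
  (forall j, j <= k -> h (x j) != [::]) ->
  (forall j, j <= k ->
     exists j' i', [/\ 1 <= j' <= l, 1 <= i' <= i j' & h (x j) = blk zero one j' i'])
  /\
  (forall j, 1 <= j <= l ->
     exists g hj, [/\ g <= k, hj <= k - g,
       (forall p, in_itv (Iint i j) p <->
          exists2 t, t <= hj & in_itv (Ihpi h (power_pattern Sigma k x n) (Jint n (g + t))) p)
     & (forall t1 t2 p, t1 <= hj -> t2 <= hj -> t1 != t2 ->
          in_itv (Ihpi h (power_pattern Sigma k x n) (Jint n (g + t1))) p ->
          ~~ in_itv (Ihpi h (power_pattern Sigma k x n) (Jint n (g + t2))) p)]).
Proof.
move=> zo m2 xd nb l0 ip _ E hne.
pose js := iota 0 k.+1.
pose ps := [seq (h (x j), n j) | j <- js].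
pose ts := flatten [seq nseq (i j) j | j <- iota 1 l].
have Ecat : catp ps = U zero one ts.
  by rewrite /ps -happly_pp /ts -wword_U; exact: E.
have okps : all (@okp _) ps.
  apply/allP => p /mapP [j]; rewrite mem_iota add0n ltnS => jk ->.
  by rewrite /okp /= hne //; case/andP: (nb j jk).
have sts : sorted leq ts := sortedF _ (iota_sorted 1 l).
have [tsl [Hs Ht Htake Hq]] := good zo sts okps Ecat.
have sps : size ps = k.+1 by rewrite size_map size_iota.
have nthps : forall j, j <= k -> nth ([::],0) ps j = (h (x j), n j).
  by move=> j jk; rewrite (nth_map 0) ?size_iota // nth_iota.
have cnt : forall t, 1 <= t <= l -> count_mem t ts = i t.
  move=> t tl; rewrite count_flatten -map_comp.
  rewrite (eq_map (g := fun j => (j == t) * i j)); last by move=> j /=; rewrite count_nseq.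
  by apply: sumn_ind; [apply: iota_uniq | rewrite mem_iota; lia].
split.
- move=> j jk.
  have jps : j < size ps by rewrite sps.
  have [a [t [a0 Eu Enth]]] := Hq j jps.
  rewrite nthps // /= in Eu Enth.
  have n0 : 0 < n j by case/andP: (nb j jk) => /ltnW.
  have ant : a * n j <= count_mem t ts.
    rewrite Ht count_flatten; apply: leq_trans (nth_le_sumn _ j).
    by rewrite (nth_map [::]) ?Hs // Enth count_nseq /= eqxx mul1n.
  have tin : t \in ts.
    by rewrite -has_pred1 has_count; apply: leq_trans ant; rewrite muln_gt0 a0.
  have tl : 1 <= t <= l by move: (memF tin); rewrite mem_iota add1n ltnS.
  exists t, a; split => //.
  + by rewrite a0 /= -(cnt t tl); apply: leq_trans ant; apply: leq_pmulr.
  + by rewrite Eu blk_U.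
- pose Sj j := \sum_(1 <= t < j) t.+1 * i t.
  have bnd : forall j, 1 <= j <= l.+1 -> exists2 g, g <= k.+1 & P ps g = Sj j.
    move=> j jl.
    have Hq' : forall q, q < size tsl -> exists c t, nth [::] tsl q = nseq c t.
      move=> q; rewrite Hs => /Hq [a [t [_ _ ->]]].
      by exists (a * (nth ([::],0) ps q).2), t.
    have stsl : sorted leq (flatten tsl) by rewrite -Ht.
    have [g [gs Eg]] := filter_pre j stsl Hq'.
    exists g; first by rewrite -sps -Hs.
    rewrite /P Htake Eg -Ht /ts.
    have e1 : l = j.-1 + (l.+1 - j) by lia.
    have e2 : 1 + j.-1 = j by lia.
    rewrite [in iota 1 l]e1 iotaD e2 map_cat flatten_cat filter_cat.
    rewrite (eq_in_filter (a2 := pred0) (s := flatten [seq nseq (i t) t | t <- iota j _])).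
      rewrite filter_pred0 cats0.
      rewrite (_ : [seq z <- _ | z < j] = flatten [seq nseq (i t) t | t <- iota 1 j.-1]).
        by rewrite sizeU /Sj /index_iota subn1.
      by apply/all_filterP/allP => z /memF; rewrite mem_iota; lia.
    move=> z /memF; rewrite mem_iota /= => H; apply/negbTE; lia.
  have HT : forall g, g <= k.+1 ->
      happly h (take (\sum_(t < g) n t) (power_pattern Sigma k x n)) = catp (take g ps).
    move=> g gk.
    have -> : \sum_(t < g) n t = sumn (map size (take g [seq nseq (n j) (@Var Sigma (x j)) | j <- js])).
      rewrite -map_take take_iota (minn_idPl gk) -map_comp sumnE big_map.
      rewrite -(big_mkord xpredT n) /index_iota subn0; apply: eq_bigr => j _.
      by rewrite /= size_nseq.
    by rewrite /power_pattern takeF -map_take happly_pp /ps map_take.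
  have HI : forall g, g <= k -> Ihpi h (power_pattern Sigma k x n) (Jint n g) = ((P ps g).+1, P ps g.+1).
    move=> g gk; rewrite /Ihpi /Jint /= !HT //; exact: leqW.
  move=> j jl.
  have jl1 : 1 <= j <= l.+1 by lia.
  have [g1 g1k E1] := bnd j jl1.
  have jl2 : 1 <= j.+1 <= l.+1 by lia.
  have [g2 g2k E2] := bnd j.+1 jl2.
  have SS : Sj j < Sj j.+1.
    rewrite /Sj big_nat_recr /=; last by case/andP: jl.
    by rewrite -[X in X < _]addn0 ltn_add2l muln_gt0 ip.
  have g12 : g1 < g2.
    rewrite ltnNge; apply/negP => /(P_mono ps); rewrite E1 E2 leqNgt SS //.
  have eg2 : g2 = g1 + ((g2 - g1).-1).+1 by lia.
  exists g1, (g2 - g1).-1.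
  have Ij : Iint i j = ((P ps g1).+1, P ps g2) by rewrite E1 E2.
  split.
  + lia.
  + lia.
  + move=> p; rewrite Ij; split.
    * move=> /andP[/= H1 /= H2]; rewrite eg2 in H2.
      have [t td Htt] := P_find H1 H2.
      exists t => //; rewrite HI; try lia; exact: Htt.
    * move=> [t td]; rewrite HI; last by lia.
      rewrite /in_itv /= => /andP[H1 H2]; apply/andP; split => /=.
      - by apply: leq_ltn_trans H1; apply: P_mono; lia.
      - by apply: leq_trans H2 _; apply: P_mono; lia.
  + move=> t1 t2 p t1h t2h ne; rewrite !HI; try lia.
    rewrite /in_itv /= => /andP[a1 b1]; apply/negP => /andP[a2 b2].
    case: (ltngtP t1 t2) => [lt|lt|eq].
    * have le1 : (g1 + t1).+1 <= g1 + t2 by lia.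
      have := P_mono ps le1; lia.
    * have le1 : (g1 + t2).+1 <= g1 + t1 by lia.
      have := P_mono ps le1; lia.
    * by rewrite eq eqxx in ne.
Qed.
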